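(* Let two stochastic CA have the same set of states and explicit global functions $F_A$ and $F_B$. If $S_{F_A}=S_{F_B}$ then $N_{F_A}=N_{F_B}$.
   Context: A stochastic CA is $(Q,R,V,V',f)$ with $Q$ finite states, $R$ finite random symbols, $V=\{v_1,\dots,v_r\}$, $V'=\{v'_1,\dots,v'_{r'}\}$ finite subsets of $\mathbb{Z}$, $f:Q^r\times R^{r'}\to Q$; explicit global function $F(c,s)_z=f((c_{z+v_1},\dots,c_{z+v_r}),(s_{z+v'_1},\dots,s_{z+v'_{r'}}))$. The non-deterministic global function is $N_F(c)=\{F(c,s):s\in R^{\mathbb{Z}}\}$. The stochastic global function is $S_F(c)([u]_z)=\nu_R\{s:F(c,s)\in[u]_z\}$, where $\nu_R$ is the uniform Bernoulli measure on $R^{\mathbb{Z}}$ and $[u]_z=\{c:c_{z+x}=u_x,0\le x<|u|\}$. *)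

(* Defs.v *)
From mathcomp Require Import all_boot all_order all_algebra.
Set Implicit Arguments. Unset Strict Implicit. Unset Printing Implicit Defensive.
Import Order.TTheory GRing.Theory Num.Theory.

Definition config (A : Type) := int -> A.

(* V = (v_1,..,v_r), V' = (v'_1,..,v'_r') are lists of distinct integers (finite subsets
   of Z given with an enumeration), f : Q^r x R^r' -> Q. *)
Definition explicitF (Q R : Type) (r r' : nat) (V : r.-tuple int) (V' : r'.-tuple int)
    (f : r.-tuple Q -> r'.-tuple R -> Q) (c : config Q) (s : config R) : config Q :=
  fun z => f [tuple of map (fun v => c (z + v)%R) V] [tuple of map (fun v => s (z + v)%R) V'].

Definition NF (Q R : Type) (r r' : nat) (V : r.-tuple int) (V' : r'.-tuple int)
    (f : r.-tuple Q -> r'.-tuple R -> Q) (c : config Q) : config Q -> Prop :=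
  fun d => exists s : config R, explicitF V V' f c s = d.

Definition in_cyl (Q : eqType) (u : seq Q) (z : int) (d : config Q) : bool :=
  all (fun x : nat => d (z + x%:Z)%R == nth (d z) u x) (iota 0 (size u)).

(* Uniform Bernoulli measure nu_R of an event E ⊆ R^Z that only depends on the
   coordinates in the window [lo, lo + n): it is the proportion of the |R|^n words
   w in R^n whose extension (by an arbitrary fixed symbol r0 outside the window)
   lies in E. *)
Definition window_ext (R : Type) (r0 : R) (lo : int) (n : nat) (w : {ffun 'I_n -> R})
    : config R :=
  fun i => match insub (`|i - lo|%N) with
           | Some k => if (lo <= i)%R then w k else r0
           | None => r0
           end.

Definition nu_window (R : finType) (r0 : R) (lo : int) (n : nat)
    (E : config R -> bool) : rat :=
  (#|[set w : {ffun 'I_n -> R} | E (window_ext r0 lo w)]|%:R / (#|R| ^ n)%:R)%R.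

Definition radius (r' : nat) (V' : r'.-tuple int) : nat := \max_(v <- V') `|v|%N.

(* Stochastic global function evaluated on a cylinder:
   S_F(c)([u]_z) = nu_R { s : F(c,s) ∈ [u]_z }.  The event depends only on the
   coordinates of s in [z - M, z + |u| + M), M = max |v'|, so nu_window computes
   exactly its uniform Bernoulli measure. *)
Definition SF (Q : eqType) (R : finType) (r0 : R) (r r' : nat) (V : r.-tuple int)
    (V' : r'.-tuple int) (f : r.-tuple Q -> r'.-tuple R -> Q)
    (c : config Q) (u : seq Q) (z : int) : rat :=
  nu_window r0 (z - (radius V')%:Z)%R (size u + 2 * radius V')
    (fun s => in_cyl u z (explicitF V V' f c s)).

(* Main.v *)
Require Import Defs.
From mathcomp Require Import all_boot all_order all_algebra.
From mathcomp Require Import zify.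
From Stdlib Require Import Classical ClassicalEpsilon FunctionalExtensionality PropExtensionality.
Import Order.TTheory GRing.Theory Num.Theory.
Set Implicit Arguments. Unset Strict Implicit.

Lemma F_loc (Q R : Type) r r' (V : r.-tuple int) (V' : r'.-tuple int) (f : r.-tuple Q -> r'.-tuple R -> Q) (c : config Q)
  (s s' : config R) (z : int) :
  (forall v : int, v \in (V' : seq int) -> s (z + v)%R = s' (z + v)%R :> R) ->
  explicitF V V' f c s z = explicitF V V' f c s' z.
Proof.
move=> H; rewrite /explicitF; congr (f _ _); apply: val_inj => /=.
apply/eq_in_map => v Hv; exact: H.
Qed.

Lemma rad_ge r' (V' : r'.-tuple int) v : v \in (V' : seq int) -> (absz v <= radius V')%N.
Proof.
move=> Hv; rewrite /radius.
exact: (@leq_bigmax_seq _ (V' : seq int) xpredT (fun v : int => absz v) v Hv).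
Qed.

Section Compact.
Variables (Q : Type) (R : finType) (r0 : R) (r r' : nat) (V : r.-tuple int)
  (V' : r'.-tuple int) (f : r.-tuple Q -> r'.-tuple R -> Q) (c d : config Q).

Definition approx (n : nat) (s : config R) :=
  forall z : int, (absz z < n)%N -> explicitF V V' f c s z = d z.

Definition agree (k : nat) (s p : config R) :=
  forall i : int, (absz i < k)%N -> s i = p i.

Definition Good k p := forall n : nat, exists s, agree k s p /\ approx n s.

Lemma good_step k p : Good k p -> exists q, agree k q p /\ Good k.+1 q.
Proof.
move=> Hg; apply: NNPP => Hn.
pose upd (ab : R * R) := fun i : int =>
  if i == (Posz k) then ab.1 else if i == (- (Posz k))%R then ab.2 else p i.
have H : forall ab : R * R, exists n, ~ (exists s, agree k.+1 s (upd ab) /\ approx n s).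
  move=> ab; apply: not_all_ex_not => HG; apply: Hn; exists (upd ab); split=> //.
  move=> i Hi; rewrite /upd.
  case: eqP => [Ei|Ni]; first by exfalso; rewrite Ei in Hi; lia.
  case: eqP => [Ei|Ni2] //; by exfalso; rewrite Ei in Hi; lia.
pose g ab := proj1_sig (constructive_indefinite_description _ (H ab)).
have Hgf ab : ~ (exists s, agree k.+1 s (upd ab) /\ approx (g ab) s).
  exact: (proj2_sig (constructive_indefinite_description _ (H ab))).
have [s [Hs1 Hs2]] := Hg (\max_(ab : R * R) g ab)%N.
apply: (Hgf (s (Posz k), s (- (Posz k))%R)); exists s; split.
  move=> i Hi; rewrite /upd /=.
  case: eqP => [->|Ni] //; case: eqP => [->|Ni2] //.
  apply: Hs1; lia.
move=> z Hz; apply: Hs2.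
apply: (leq_trans Hz); exact: (@leq_bigmax _ g (s (Posz k), s (- (Posz k))%R)).
Qed.

Definition next (k : nat) (p : config R) : config R :=
  epsilon (inhabits (fun _ => r0)) (fun q => agree k q p /\ Good k.+1 q).

Fixpoint seqP (k : nat) : config R :=
  match k with 0 => fun _ => r0 | k'.+1 => next k' (seqP k') end.

Hypothesis Happ : forall n, exists s, approx n s.

Lemma seqP_good k : Good k (seqP k).
Proof.
elim: k => [|k IH] /=.
  move=> n; have [s Hs] := Happ n; exists s; split=> // i; lia.
have := epsilon_spec (inhabits (fun _ => r0)) (fun q => agree k q (seqP k) /\ Good k.+1 q)
  (@good_step k _ IH).
by case.
Qed.

Lemma seqP_agree k m : (k <= m)%N -> agree k (seqP m) (seqP k).
Proof.
elim: m => [|m IH] Hkm.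
  by rewrite leqn0 in Hkm; move/eqP: Hkm => ->.
rewrite leq_eqVlt in Hkm; case/orP: Hkm => [/eqP->//|Hkm].
move=> i Hi /=.
have := epsilon_spec (inhabits (fun _ => r0)) (fun q => agree m q (seqP m) /\ Good m.+1 q)
  (@good_step m _ (seqP_good m)).
case=> Ha _; rewrite /next Ha; last by lia.
by apply: IH.
Qed.

Definition slim : config R := fun i => seqP (absz i).+1 i.

Lemma slim_agree k : agree k slim (seqP k).
Proof.
move=> i Hi; rewrite /slim; apply: esym; apply: seqP_agree => //; lia.
Qed.

Lemma compact_exists : exists s, explicitF V V' f c s = d.
Proof.
exists slim; apply: functional_extensionality => z.
pose k := (absz z + radius V').+1.
have [s [Hs1 Hs2]] := seqP_good k (absz z).+1.
rewrite -(Hs2 z) //.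
apply: F_loc => v Hv.
have Hb := @rad_ge _ _ _ Hv.
rewrite (@slim_agree k); last by rewrite /k; lia.
rewrite Hs1 //; rewrite /k; lia.
Qed.

End Compact.

Lemma NF_iff (Q : Type) (R : finType) (r0 : R) r r' (V : r.-tuple int) (V' : r'.-tuple int)
  (f : r.-tuple Q -> r'.-tuple R -> Q) (c d : config Q) :
  NF V V' f c d <-> forall n, exists s, approx V V' f c d n s.
Proof.
split.
  by move=> [s Hs] n; exists s => z _; rewrite Hs.
move=> H; exact: (compact_exists r0 H).
Qed.

Lemma in_cylP (Q : eqType) (u : seq Q) (z : int) (e : config Q) :
  in_cyl u z e <-> forall x, (x < size u)%N -> e (z + Posz x)%R = nth (e z) u x.
Proof.
rewrite /in_cyl; split.
  move/allP=> H x Hx; apply/eqP; apply: H; rewrite mem_iota; lia.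
move=> H; apply/allP => x; rewrite mem_iota => /andP [_ Hx]; apply/eqP; apply: H; lia.
Qed.

Lemma in_cyl_ext (Q : eqType) (u : seq Q) (z : int) (e e' : config Q) :
  (forall x, (x < size u)%N -> e (z + Posz x)%R = e' (z + Posz x)%R) ->
  in_cyl u z e = in_cyl u z e'.
Proof.
move=> H; rewrite /in_cyl; apply: eq_in_all => x; rewrite mem_iota => /andP [_ Hx].
rewrite H //; rewrite (set_nth_default (e' z)) //; lia.
Qed.

Lemma window_ext_agree (R : Type) (r0 : R) (lo : int) (N : nat) (s : config R) (i : int) :
  (lo <= i)%R -> (i < lo + Posz N)%R ->
  window_ext r0 lo [ffun k : 'I_N => s (lo + Posz k)%R] i = s i.
Proof.
move=> H1 H2; rewrite /window_ext.
case: insubP => [k _ Ek|Hn]; last by exfalso; move/negP: Hn; apply; lia.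
rewrite H1 ffunE; congr (s _); rewrite Ek; lia.
Qed.

Lemma SF_pos (Q : eqType) (R : finType) (r0 : R) r r' (V : r.-tuple int) (V' : r'.-tuple int)
  (f : r.-tuple Q -> r'.-tuple R -> Q) (c : config Q) (u : seq Q) (z : int) :
  SF r0 V V' f c u z != 0%R <-> exists s, in_cyl u z (explicitF V V' f c s).
Proof.
rewrite /SF /nu_window.
set lo := (z - _)%R; set N := (size u + _)%N.
have HR : (#|R| ^ N)%N != 0%N by rewrite expn_eq0 negb_and; apply/orP; left;
  rewrite -lt0n; apply/card_gt0P; exists r0.
rewrite mulf_eq0 invr_eq0 !pnatr_eq0 negb_or (negbTE HR) andbT -lt0n card_gt0.
split.
  by case/set0Pn => w; rewrite inE => Hw; exists (window_ext r0 lo w).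
move=> [s Hs]; apply/set0Pn; exists [ffun k : 'I_N => s (lo + Posz k)%R]; rewrite inE.
have Heq : in_cyl u z (explicitF V V' f c (window_ext r0 lo [ffun k : 'I_N => s (lo + Posz k)%R])) = in_cyl u z (explicitF V V' f c s).
  2: by rewrite /= Heq.
apply: in_cyl_ext => x Hx; apply: F_loc => v Hv.
have Hb := @rad_ge _ _ _ Hv.
apply: window_ext_agree; rewrite /lo /N; lia.
Qed.

Lemma approx_cyl (Q : eqType) (R : finType) r r' (V : r.-tuple int) (V' : r'.-tuple int)
  (f : r.-tuple Q -> r'.-tuple R -> Q) (c d : config Q) (n : nat) :
  ((exists s, approx V V' f c d n.+1 s) ->
  exists s, in_cyl (mkseq (fun x => d (- Posz n + Posz x)%R) (n + n))
                   (- Posz n)%R (explicitF V V' f c s)) /\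
  ((exists s, in_cyl (mkseq (fun x => d (- Posz n + Posz x)%R) (n + n))
                   (- Posz n)%R (explicitF V V' f c s)) ->
   exists s, approx V V' f c d n s).
Proof.
split.
  move=> [s Hs]; exists s; apply/in_cylP => x; rewrite size_mkseq => Hx.
  rewrite nth_mkseq //; apply: Hs; lia.
move=> [s Hs]; exists s => z Hz.
move/in_cylP: Hs; rewrite size_mkseq => Hs.
have Hx : (absz (z + Posz n)%R < n + n)%N by lia.
have := Hs _ Hx; rewrite nth_mkseq //.
have -> : (- Posz n + Posz (absz (z + Posz n)%R))%R = z by lia.
by [].
Qed.

Theorem fact2 (Q : finType)
    (RA : finType) (rA0 : RA) (rA rA' : nat) (VA : rA.-tuple int) (VA' : rA'.-tuple int)
    (fA : rA.-tuple Q -> rA'.-tuple RA -> Q)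
    (RB : finType) (rB0 : RB) (rB rB' : nat) (VB : rB.-tuple int) (VB' : rB'.-tuple int)
    (fB : rB.-tuple Q -> rB'.-tuple RB -> Q) :
  uniq VA -> uniq VA' -> uniq VB -> uniq VB' ->
  (forall (c : config Q) (u : seq Q) (z : int),
      SF rA0 VA VA' fA c u z = SF rB0 VB VB' fB c u z) ->
  forall c : config Q, NF VA VA' fA c = NF VB VB' fB c.
Proof.
move=> _ _ _ _ H c; apply: functional_extensionality => d.
apply: propositional_extensionality.
rewrite (NF_iff rA0) (NF_iff rB0).
split=> Hn n.
  apply: (proj2 (approx_cyl _ _ _ _ _ _)); apply/(SF_pos rB0); rewrite -H; apply/(SF_pos rA0);
  apply: (proj1 (approx_cyl _ _ _ _ _ _)); exact: Hn.
apply: (proj2 (approx_cyl _ _ _ _ _ _)); apply/(SF_pos rA0); rewrite H; apply/(SF_pos rB0);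
apply: (proj1 (approx_cyl _ _ _ _ _ _)); exact: Hn.
Qed.
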